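(* Let $\Omega\subseteq\mathbb{R}^2$ be a domain and let $f_1,f_2,c_0,c_1,c_2$ be smooth real functions of one variable $r>0$. For $x=(x_1,x_2)\in\Omega$ and $y=(y_1,y_2)\in\mathbb{R}^2\setminus\{0\}$ put $$r=\sqrt{x_1^2+x_2^2},\qquad u=\sqrt{y_1^2+y_2^2},\qquad s=\frac{x_1y_1+x_2y_2}{u},$$ and consider the open set $U=\{(x,y): x\in\Omega,\ y\neq 0,\ r^2-s^2>0\}$, i.e. the set of pairs with $x$ and $y$ linearly independent. On $U$ define $$P=f_1(r)\,s+f_2(r)\sqrt{r^2-s^2},\qquad Q=c_0(r)+c_2(r)s^2+c_1(r)\,s\sqrt{r^2-s^2},$$ and, for $i=1,2$, $$G^i=u\,P\,y_i+u^2\,Q\,x_i .$$ Then the following hold on $U$. (1) The mean Berwald curvature of this spray vanishes identically: $E_{ij}=0$ for all $i,j\in\{1,2\}$. (2) The function $H:=(n+1)(P-sP_s)+(r^2-s^2)(Q_s-sQ_{ss})$ with $n=2$ equals $\dfrac{r^2\bigl(3f_2(r)+r^2c_1(r)\bigr)}{\sqrt{r^2-s^2}}$. In particular, at every point of $U$ with $3f_2(r)+r^2c_1(r)\neq 0$, $H\neq 0$ although $E_{ij}=0$. Consequently, in dimension two the condition $(n+1)(P-sP_s)+(r^2-s^2)(Q_s-sQ_{ss})=0$ is not necessary for the vanishing of the mean Berwald curvature of a spray of the form $G^i=uPy_i+u^2Qx_i$.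
   Context: The square root denotes the nonnegative square root; by the Cauchy–Schwarz inequality $s^2\le r^2$. Here $P,Q$ are regarded as functions of $(r,s)$, and $P_s,Q_s,Q_{ss}$ denote partial derivatives with respect to $s$ at fixed $r$. The functions $G^i(x,y)$ are the coefficients of a spray on $U$, and its mean Berwald curvature is $E_{ij}=\frac12\,\frac{\partial^2}{\partial y_i\,\partial y_j}\Bigl(\sum_{m=1}^2\frac{\partial G^m}{\partial y_m}\Bigr)$, $i,j\in\{1,2\}$. *)

(* Defs.v *)
From Stdlib Require Import Reals.
From Coquelicot Require Import Coquelicot.
Open Scope R_scope.

Definition domain2 (Omega : R -> R -> Prop) : Prop :=
  (exists a b, Omega a b) /\
  open (fun p : R * R => Omega (fst p) (snd p)) /\
  (forall A B : R * R -> Prop, open A -> open B ->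
     (forall a b, Omega a b -> A (a, b) \/ B (a, b)) ->
     (exists a b, Omega a b /\ A (a, b)) ->
     (exists a b, Omega a b /\ B (a, b)) ->
     exists a b, Omega a b /\ A (a, b) /\ B (a, b)).

Definition smooth_pos (f : R -> R) : Prop :=
  forall (k : nat) (r : R), 0 < r -> ex_derive (Derive_n f k) r.

(* Functions of (x1, x2, y1, y2). *)
Definition fn4 := R -> R -> R -> R -> R.

Definition rr (x1 x2 : R) : R := sqrt (x1 ^ 2 + x2 ^ 2).
Definition uu (y1 y2 : R) : R := sqrt (y1 ^ 2 + y2 ^ 2).
Definition ss (x1 x2 y1 y2 : R) : R := (x1 * y1 + x2 * y2) / uu y1 y2.

Definition inU (Omega : R -> R -> Prop) (x1 x2 y1 y2 : R) : Prop :=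
  Omega x1 x2 /\ (y1, y2) <> (0, 0) /\
  rr x1 x2 ^ 2 - ss x1 x2 y1 y2 ^ 2 > 0.

Definition PP (f1 f2 : R -> R) (r s : R) : R :=
  f1 r * s + f2 r * sqrt (r ^ 2 - s ^ 2).
Definition QQ (c0 c1 c2 : R -> R) (r s : R) : R :=
  c0 r + c2 r * s ^ 2 + c1 r * s * sqrt (r ^ 2 - s ^ 2).

Definition Gsp (f1 f2 c0 c1 c2 : R -> R) (i : nat) : fn4 :=
  fun x1 x2 y1 y2 =>
    let r := rr x1 x2 in let s := ss x1 x2 y1 y2 in let u := uu y1 y2 in
    let yi := if Nat.eqb i 1 then y1 else y2 in
    let xi := if Nat.eqb i 1 then x1 else x2 in
    u * PP f1 f2 r s * yi + u ^ 2 * QQ c0 c1 c2 r s * xi.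

Definition dy (k : nat) (F : fn4) : fn4 :=
  fun x1 x2 y1 y2 =>
    if Nat.eqb k 1 then Derive (fun t => F x1 x2 t y2) y1
    else Derive (fun t => F x1 x2 y1 t) y2.

(* Mean Berwald curvature E_ij = 1/2 d^2/(dy_i dy_j) (sum_m dG^m/dy_m). *)
Definition Emean (G : nat -> fn4) (i j : nat) : fn4 :=
  fun x1 x2 y1 y2 =>
    / 2 * dy i (dy j (fun a b c d => dy 1 (G 1%nat) a b c d + dy 2 (G 2%nat) a b c d))
              x1 x2 y1 y2.

Definition d_s (F : R -> R -> R) (r s : R) : R := Derive (fun t => F r t) s.

Definition HH (f1 f2 c0 c1 c2 : R -> R) (r s : R) : R :=
  (INR 2 + 1) * (PP f1 f2 r s - s * d_s (PP f1 f2) r s)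
  + (r ^ 2 - s ^ 2) * (d_s (QQ c0 c1 c2) r s - s * d_s (d_s (QQ c0 c1 c2)) r s).

(* Main.v *)
Require Import Defs.
From Stdlib Require Import Reals Lra Lia.
From Coquelicot Require Import Coquelicot.
Open Scope R_scope.


Lemma loc_pos (h : R -> R) t0 : continuous h t0 -> 0 < h t0 ->
  locally t0 (fun t => 0 < h t).
Proof.
  intros Hc Hp.
  assert (Hb : locally (h t0) (fun v => 0 < v)).
  { exists (mkposreal _ Hp). intros v Hv. unfold ball in Hv; simpl in Hv.
    unfold AbsRing_ball, abs, minus, plus, opp in Hv; simpl in Hv.
    apply Rabs_lt_between in Hv. lra. }
  exact (Hc _ Hb).
Qed.

Lemma Derive_loc (f g h : R -> R) t0 : (forall t, ex_derive h t) -> 0 < h t0 ->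
  (forall t, 0 < h t -> f t = g t) -> Derive f t0 = Derive g t0.
Proof.
  intros Hd Hp He. apply Derive_ext_loc.
  generalize (loc_pos h t0 (ex_derive_continuous _ _ (Hd t0)) Hp).
  apply filter_imp. intros t Ht. now apply He.
Qed.

Lemma key (f1 f2 c0 c1 c2 : R -> R) sg x1 x2 y1 y2 :
  sg * sg = 1 -> 0 < sg * (x1 * y2 - x2 * y1) ->
  uu y1 y2 * PP f1 f2 (rr x1 x2) (ss x1 x2 y1 y2)
    = f1 (rr x1 x2) * (x1*y1+x2*y2) + f2 (rr x1 x2) * sg * (x1*y2 - x2*y1) /\
  uu y1 y2 ^ 2 * QQ c0 c1 c2 (rr x1 x2) (ss x1 x2 y1 y2)
    = c0 (rr x1 x2) * (y1^2+y2^2) + c2 (rr x1 x2) * (x1*y1+x2*y2)^2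
      + c1 (rr x1 x2) * sg * (x1*y1+x2*y2) * (x1*y2 - x2*y1).
Proof.
  intros Hs HK.
  assert (Hy : 0 < y1^2+y2^2).
  { destruct (Req_dec y1 0); destruct (Req_dec y2 0); subst; try nra. }
  assert (Hu2 : uu y1 y2 ^ 2 = y1^2+y2^2) by (unfold uu; apply pow2_sqrt; lra).
  assert (Hu : 0 < uu y1 y2) by (unfold uu; apply sqrt_lt_R0; lra).
  assert (Hr2 : rr x1 x2 ^ 2 = x1^2+x2^2) by (unfold rr; apply pow2_sqrt; nra).
  assert (Hw : sqrt (rr x1 x2 ^ 2 - ss x1 x2 y1 y2 ^ 2) = sg * (x1*y2 - x2*y1) / uu y1 y2).
  { rewrite <- (sqrt_pow2 (sg * (x1*y2 - x2*y1) / uu y1 y2)).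
    2:{ apply Rlt_le. apply Rdiv_lt_0_compat; lra. }
    f_equal. rewrite Hr2. unfold ss.
    apply (Rmult_eq_reg_r (uu y1 y2 ^ 2)). 2: nra.
    field_simplify; try lra. all: try rewrite Hu2.
    all: try (replace (sg^2) with 1 by nra). all: try nra. }
  unfold PP, QQ. rewrite Hw. unfold ss. split.
  - field. lra.
  - replace (uu y1 y2 ^ 2) with (y1^2+y2^2) by auto.
    replace (sg * (x1 * y2 - x2 * y1) / uu y1 y2) with (sg * (x1 * y2 - x2 * y1) * uu y1 y2 / (y1^2+y2^2)).
    2:{ rewrite <- Hu2. field. lra. }
    replace ((x1 * y1 + x2 * y2) / uu y1 y2) with ((x1 * y1 + x2 * y2) * uu y1 y2 / (y1^2+y2^2)).
    2:{ rewrite <- Hu2. field. lra. }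
    field_simplify; try lra. rewrite Hu2. field. lra.
Qed.

Section S.
Variables (f1 f2 c0 c1 c2 : R -> R) (sg x1 x2 : R).
Hypothesis Hs : sg * sg = 1.
Let F1 := f1 (rr x1 x2). Let F2 := f2 (rr x1 x2).
Let C0 := c0 (rr x1 x2). Let C1 := c1 (rr x1 x2). Let C2 := c2 (rr x1 x2).
Let G := Gsp f1 f2 c0 c1 c2.
Definition Ap y1 y2 := F1 * (x1*y1+x2*y2) + F2 * sg * (x1*y2 - x2*y1).
Definition Bp y1 y2 := C0 * (y1^2+y2^2) + C2 * (x1*y1+x2*y2)^2
      + C1 * sg * (x1*y1+x2*y2) * (x1*y2 - x2*y1).

Lemma G1_eq y1 y2 : 0 < sg * (x1 * y2 - x2 * y1) ->
  G 1%nat x1 x2 y1 y2 = Ap y1 y2 * y1 + Bp y1 y2 * x1.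
Proof. intros H. destruct (key f1 f2 c0 c1 c2 sg x1 x2 y1 y2 Hs H) as [E1 E2].
  unfold G, Gsp. simpl. change (uu y1 y2 * (uu y1 y2 * 1)) with (uu y1 y2 ^ 2). rewrite E1, E2. unfold Ap, Bp, F1, F2, C0, C1, C2. ring. Qed.
Lemma G2_eq y1 y2 : 0 < sg * (x1 * y2 - x2 * y1) ->
  G 2%nat x1 x2 y1 y2 = Ap y1 y2 * y2 + Bp y1 y2 * x2.
Proof. intros H. destruct (key f1 f2 c0 c1 c2 sg x1 x2 y1 y2 Hs H) as [E1 E2].
  unfold G, Gsp. simpl. change (uu y1 y2 * (uu y1 y2 * 1)) with (uu y1 y2 ^ 2). rewrite E1, E2. unfold Ap, Bp, F1, F2, C0, C1, C2. ring. Qed.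

Let L y1 y2 := x1*y1+x2*y2.
Let K y1 y2 := x1*y2 - x2*y1.
Let a := 3*F1 + 2*C0 + 2*C2*(x1^2+x2^2).
Let b := 3*F2 + C1*(x1^2+x2^2).

Lemma S_eq y1 y2 : 0 < sg * (x1 * y2 - x2 * y1) ->
  dy 1 (G 1%nat) x1 x2 y1 y2 + dy 2 (G 2%nat) x1 x2 y1 y2 = a * L y1 y2 + b * sg * K y1 y2.
Proof.
  intros H. unfold dy; simpl.
  rewrite (Derive_loc (fun t => G 1%nat x1 x2 t y2) (fun t => Ap t y2 * t + Bp t y2 * x1) (fun t => sg * (x1 * y2 - x2 * t)) y1); 
   [| intros; auto_derive; auto | exact H | intros; now apply G1_eq].
  rewrite (Derive_loc (fun t => G 2%nat x1 x2 y1 t) (fun t => Ap y1 t * t + Bp y1 t * x2) (fun t => sg * (x1 * t - x2 * y1)) y2);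
   [| intros; auto_derive; auto | exact H | intros; now apply G2_eq].
  unfold Ap, Bp.
  rewrite (is_derive_unique _ _ ((F1 * x1 - F2 * sg * x2) * y1 + Ap y1 y2 + (2 * C0 * y1 + 2 * C2 * L y1 y2 * x1 + C1 * sg * (x1 * K y1 y2 - x2 * L y1 y2)) * x1)).
  2:{ auto_derive; auto. unfold Ap, L, K. ring. }
  rewrite (is_derive_unique _ _ ((F1 * x2 + F2 * sg * x1) * y2 + Ap y1 y2 + (2 * C0 * y2 + 2 * C2 * L y1 y2 * x2 + C1 * sg * (x2 * K y1 y2 + x1 * L y1 y2)) * x2)).
  2:{ auto_derive; auto. unfold Ap, L, K. ring. }
  unfold Ap, L, K, a, b. ring.
Qed.

Lemma dy1E (F : fn4) y1 y2 : dy 1 F x1 x2 y1 y2 = Derive (fun t => F x1 x2 t y2) y1.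
Proof. reflexivity. Qed.
Lemma dy2E (F : fn4) y1 y2 : dy 2 F x1 x2 y1 y2 = Derive (fun t => F x1 x2 y1 t) y2.
Proof. reflexivity. Qed.

Let SF : fn4 := fun a b c d => dy 1 (G 1%nat) a b c d + dy 2 (G 2%nat) a b c d.

Lemma dS1 y1 y2 : 0 < sg * (x1 * y2 - x2 * y1) -> dy 1 SF x1 x2 y1 y2 = a * x1 - b * sg * x2.
Proof.
  intros H. rewrite dy1E.
  rewrite (Derive_loc (fun t => SF x1 x2 t y2) (fun t => a * L t y2 + b * sg * K t y2)
     (fun t => sg * (x1 * y2 - x2 * t)) y1);
   [| intros; auto_derive; auto | exact H | intros; now apply S_eq].
  apply is_derive_unique. unfold L, K. auto_derive; auto. ring.
Qed.
Lemma dS2 y1 y2 : 0 < sg * (x1 * y2 - x2 * y1) -> dy 2 SF x1 x2 y1 y2 = a * x2 + b * sg * x1.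
Proof.
  intros H. rewrite dy2E.
  rewrite (Derive_loc (fun t => SF x1 x2 y1 t) (fun t => a * L y1 t + b * sg * K y1 t)
     (fun t => sg * (x1 * t - x2 * y1)) y2);
   [| intros; auto_derive; auto | exact H | intros; now apply S_eq].
  apply is_derive_unique. unfold L, K. auto_derive; auto. ring.
Qed.

Lemma dSj j y1 y2 : (j = 1%nat \/ j = 2%nat) -> 0 < sg * (x1 * y2 - x2 * y1) ->
  dy j SF x1 x2 y1 y2 = if Nat.eqb j 1 then a * x1 - b * sg * x2 else a * x2 + b * sg * x1.
Proof. intros [-> | ->] H; [apply dS1 | apply dS2]; exact H. Qed.

Lemma Ezero i j y1 y2 : (i = 1%nat \/ i = 2%nat) -> (j = 1%nat \/ j = 2%nat) ->
  0 < sg * (x1 * y2 - x2 * y1) -> Emean G i j x1 x2 y1 y2 = 0.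
Proof.
  intros Hi Hj H. unfold Emean. fold SF.
  destruct Hi as [-> | ->].
  - rewrite dy1E.
    rewrite (Derive_loc (fun t => dy j SF x1 x2 t y2) (fun _ => if Nat.eqb j 1 then a * x1 - b * sg * x2 else a * x2 + b * sg * x1)
     (fun t => sg * (x1 * y2 - x2 * t)) y1);
     [| intros; auto_derive; auto | exact H | intros; now apply dSj].
    rewrite Derive_const. lra.
  - rewrite dy2E.
    rewrite (Derive_loc (fun t => dy j SF x1 x2 y1 t) (fun _ => if Nat.eqb j 1 then a * x1 - b * sg * x2 else a * x2 + b * sg * x1)
     (fun t => sg * (x1 * t - x2 * y1)) y2);
     [| intros; auto_derive; auto | exact H | intros; now apply dSj].
    rewrite Derive_const. lra.
Qed.
End S.


Lemma dQ c0 c1 c2 r t : 0 < r^2 - t^2 -> d_s (QQ c0 c1 c2) r t =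
  2 * c2 r * t + c1 r * sqrt (r^2 - t^2) - c1 r * t^2 / sqrt (r^2 - t^2).
Proof.
  intros H. unfold d_s, QQ. apply is_derive_unique. auto_derive.
  - lra.
  - assert (0 < sqrt (r^2 - t^2)) by (apply sqrt_lt_R0; lra).
    replace (r*(r*1) + - (t*(t*1))) with (r^2-t^2) by ring. field. lra.
Qed.

Lemma H_eq f1 f2 c0 c1 c2 r s : 0 < r^2 - s^2 ->
  HH f1 f2 c0 c1 c2 r s = r^2*(3*f2 r + r^2*c1 r)/sqrt(r^2-s^2).
Proof.
  intros H.
  assert (HW : 0 < sqrt (r^2 - s^2)) by (apply sqrt_lt_R0; lra).
  assert (HW2 : sqrt (r^2 - s^2) ^ 2 = r^2 - s^2) by (apply pow2_sqrt; lra).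
  unfold HH.
  assert (EP : d_s (PP f1 f2) r s = f1 r - f2 r * s / sqrt (r^2 - s^2)).
  { unfold d_s, PP. apply is_derive_unique. auto_derive; [lra|].
    replace (r*(r*1) + - (s*(s*1))) with (r^2-s^2) by ring. field. lra. }
  assert (EQ2 : d_s (d_s (QQ c0 c1 c2)) r s =
     2 * c2 r - 3 * c1 r * s / sqrt (r^2 - s^2) - c1 r * s^3 / sqrt (r^2 - s^2) ^ 3).
  { unfold d_s at 1.
    rewrite (Derive_loc _ (fun t => 2 * c2 r * t + c1 r * sqrt (r^2 - t^2) - c1 r * t^2 / sqrt (r^2 - t^2))
       (fun t => r^2 - t^2) s); [| intros; auto_derive; auto | exact H | intros; now apply dQ].
    apply is_derive_unique. auto_derive.
    - repeat split; try lra; apply Rgt_not_eq, sqrt_lt_R0; lra.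
    - replace (r*(r*1) + - (s*(s*1))) with (r^2-s^2) by ring. field_simplify; try lra. rewrite HW2. field. lra. }
  rewrite EP, EQ2, dQ by lra. unfold PP. simpl INR.
  set (W := sqrt (r^2 - s^2)) in *.
  set (D := r^2 - s^2) in *.
  replace (r^2) with (D + s^2) by (unfold D; ring).
  rewrite <- HW2. field. lra.
Qed.

Lemma rs_eq x1 x2 y1 y2 : (y1, y2) <> (0, 0) ->
  rr x1 x2 ^ 2 - ss x1 x2 y1 y2 ^ 2 = (x1*y2 - x2*y1)^2 / (y1^2+y2^2).
Proof.
  intros Hy.
  assert (Hy' : 0 < y1^2+y2^2).
  { destruct (Req_dec y1 0); destruct (Req_dec y2 0); subst; try nra. now elim Hy. }
  assert (Hu2 : uu y1 y2 ^ 2 = y1^2+y2^2) by (unfold uu; apply pow2_sqrt; lra).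
  assert (Hu : 0 < uu y1 y2) by (unfold uu; apply sqrt_lt_R0; lra).
  assert (Hr2 : rr x1 x2 ^ 2 = x1^2+x2^2) by (unfold rr; apply pow2_sqrt; nra).
  rewrite Hr2. unfold ss. unfold Rdiv. rewrite Rpow_mult_distr, pow_inv, Hu2. field. lra.
Qed.

Theorem mainTheorem1 (Omega : R -> R -> Prop) (f1 f2 c0 c1 c2 : R -> R) :
  domain2 Omega ->
  smooth_pos f1 -> smooth_pos f2 -> smooth_pos c0 -> smooth_pos c1 -> smooth_pos c2 ->
  forall x1 x2 y1 y2 : R, inU Omega x1 x2 y1 y2 ->
    (forall i j : nat, (i = 1%nat \/ i = 2%nat) -> (j = 1%nat \/ j = 2%nat) ->
       Emean (Gsp f1 f2 c0 c1 c2) i j x1 x2 y1 y2 = 0) /\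
    (let r := rr x1 x2 in let s := ss x1 x2 y1 y2 in
     HH f1 f2 c0 c1 c2 r s
       = r ^ 2 * (3 * f2 r + r ^ 2 * c1 r) / sqrt (r ^ 2 - s ^ 2) /\
     (3 * f2 r + r ^ 2 * c1 r <> 0 -> HH f1 f2 c0 c1 c2 r s <> 0)).
Proof.
  intros _ _ _ _ _ _ x1 x2 y1 y2 [_ [Hy Hpos]].
  assert (HK : x1*y2 - x2*y1 <> 0).
  { intro E. rewrite rs_eq in Hpos by exact Hy. rewrite E in Hpos.
    unfold Rdiv in Hpos. rewrite pow_i in Hpos by lia. lra. }
  split.
  - intros i j Hi Hj.
    destruct (Rlt_or_le 0 (x1*y2 - x2*y1)) as [Hp | Hn].
    + apply (Ezero f1 f2 c0 c1 c2 1); [ring | exact Hi | exact Hj | lra].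
    + apply (Ezero f1 f2 c0 c1 c2 (-1)); [ring | exact Hi | exact Hj | lra].
  - intros r s. fold r s in Hpos.
    assert (E : HH f1 f2 c0 c1 c2 r s = r ^ 2 * (3 * f2 r + r ^ 2 * c1 r) / sqrt (r ^ 2 - s ^ 2))
      by (apply H_eq; lra).
    split; [exact E|]. intros Hne. rewrite E.
    assert (0 < sqrt (r^2 - s^2)) by (apply sqrt_lt_R0; lra).
    unfold Rdiv. apply Rmult_integral_contrapositive_currified.
    + apply Rmult_integral_contrapositive_currified; [nra | exact Hne].
    + apply Rinv_neq_0_compat. lra.
Qed.
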